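(* Let $D\subset\mathbb{R}$ be an open interval, $t_0\in D$, and let $y:D\to\mathbb{R}$ be analytic with differential transform $Y(i)=\frac{1}{i!}\frac{d^i y}{dt^i}(t_0)$. Let $f(t,y)$ be an analytic function of two variables defined on a neighbourhood of the graph of $y$, not of the product form $f(t,y)=f_0(t)f_1(y)$, and let $F(n)=\frac{1}{n!}\left[\frac{d^n}{dt^n} f(t,y(t))\right]_{t=t_0}$. Regard $F(n)$ as a function of the variables $t_0, Y(0), Y(1),\dots,Y(n)$, namely $F(n)=\frac{1}{n!}\frac{d^n}{d\lambda^n}\big[f(t_0+\lambda,\sum_{i\ge0}Y(i)\lambda^i)\big]_{\lambda=0}$ with $t_0$ and the $Y(i)$ treated as independent variables. Then $F(0)=f(t_0,Y(0))$ and, for $n=1,2,\dots$, $$F(n)=\frac{1}{n}\left(\frac{\partial}{\partial t_0}F(n-1)+\sum_{i=0}^{n-1}(i+1)\,Y(i+1)\,\frac{\partial}{\partial Y(i)}F(n-1)\right).$$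
   Context: The differential transform of an analytic function $g$ at $t_0$ is the sequence $G(i)=\frac{1}{i!}g^{(i)}(t_0)$. *)

(* Defs.v *)
From Stdlib Require Import Reals Factorial.
From Coquelicot Require Import Coquelicot.
Open Scope R_scope.

Definition open_ival (a b : Rbar) (t : R) : Prop :=
  Rbar_lt a t /\ Rbar_lt t b.

Definition open2 (U : R -> R -> Prop) : Prop :=
  forall a b, U a b -> exists e, 0 < e /\
    forall x z, Rabs (x - a) < e -> Rabs (z - b) < e -> U x z.

Definition analytic_on (D : R -> Prop) (y : R -> R) : Prop :=
  forall c, D c -> exists (a : nat -> R) (r : R), 0 < r /\
    forall t, Rabs (t - c) < r -> is_pseries a (t - c) (y t).

Definition analytic2_on (U : R -> R -> Prop) (f : R -> R -> R) : Prop :=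
  forall a b, U a b -> exists (c : nat -> nat -> R) (r : R), 0 < r /\
    forall x z, Rabs (x - a) < r -> Rabs (z - b) < r ->
      (forall j, ex_series (fun k => Rabs (c j k * (x - a) ^ j * (z - b) ^ k))) /\
      ex_series (fun j => Series (fun k => Rabs (c j k * (x - a) ^ j * (z - b) ^ k))) /\
      f x z = Series (fun j => Series (fun k => c j k * (x - a) ^ j * (z - b) ^ k)).

Definition diff_transform (g : R -> R) (t0 : R) (i : nat) : R :=
  Derive_n g i t0 / INR (Factorial.fact i).

(* F(n) as a function of the independent variables s (= t0) and Z (= Y):
   F(n) = 1/n! d^n/dl^n [ f (s + l, sum_{i=0}^n Z i l^i) ] at l = 0.
   (Terms Z i with i > n do not influence the n-th derivative at 0.) *)
Definition Ftr (f : R -> R -> R) (n : nat) (s : R) (Z : nat -> R) : R :=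
  Derive_n (fun l => f (s + l) (sum_n (fun i => Z i * l ^ i) n)) n 0
  / INR (Factorial.fact n).

Definition upd (Z : nat -> R) (i : nat) (z : R) : nat -> R :=
  fun j => if Nat.eqb j i then z else Z j.

(* Main.v *)
Require Import Defs.
From Stdlib Require Import Reals.
From Coquelicot Require Import Coquelicot.
From Stdlib Require Import Lra Lia FunctionalExtensionality Factorial.
Open Scope R_scope.
Ltac Rring := cbv beta; change plus with Rplus; change mult with Rmult; match goal with |- @eq _ ?a ?b => change (@eq R a b); ring end.
Ltac toR := cbv beta; match goal with |- @eq _ ?a ?b => change (@eq R a b) end.

Fixpoint Cn (n : nat) (W : R -> R -> Prop) (g : R -> R -> R) : Prop :=
  match n with
  | O => True
  | S m => exists gx gy : R -> R -> R,
      (forall x y, W x y -> differentiable_pt_lim g x y (gx x y) (gy x y)) /\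
      Cn m W gx /\ Cn m W gy
  end.

Definition Smooth W g := forall n, Cn n W g.
Definition Open2 (W : R -> R -> Prop) := forall x y, W x y -> locally_2d W x y.

Lemma diff_const c x y : differentiable_pt_lim (fun _ _ => c) x y 0 0.
Proof.
  intros eps; exists eps; intros u v _ _.
  replace (c - c - (0 * (u - x) + 0 * (v - y))) with 0 by ring.
  rewrite Rabs_R0. apply Rmult_le_pos. destruct eps; simpl; lra.
  apply Rle_trans with (Rabs (u - x)); [apply Rabs_pos| apply Rmax_l].
Qed.

Lemma diff_p1 x y : differentiable_pt_lim (fun u _ => u) x y 1 0.
Proof.
  intros eps; exists eps; intros u v _ _.
  replace (u - x - (1 * (u - x) + 0 * (v - y))) with 0 by ring.
  rewrite Rabs_R0. apply Rmult_le_pos. destruct eps; simpl; lra.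
  apply Rle_trans with (Rabs (u - x)); [apply Rabs_pos| apply Rmax_l].
Qed.

Lemma diff_p2 x y : differentiable_pt_lim (fun _ v => v) x y 0 1.
Proof.
  intros eps; exists eps; intros u v _ _.
  replace (v - y - (0 * (u - x) + 1 * (v - y))) with 0 by ring.
  rewrite Rabs_R0. apply Rmult_le_pos. destruct eps; simpl; lra.
  apply Rle_trans with (Rabs (u - x)); [apply Rabs_pos| apply Rmax_l].
Qed.

Lemma diff_plus x y : differentiable_pt_lim (fun u v => u + v) x y 1 1.
Proof.
  intros eps; exists eps; intros u v _ _.
  replace (u + v - (x + y) - (1 * (u - x) + 1 * (v - y))) with 0 by ring.
  rewrite Rabs_R0. apply Rmult_le_pos. destruct eps; simpl; lra.
  apply Rle_trans with (Rabs (u - x)); [apply Rabs_pos| apply Rmax_l].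
Qed.

Lemma diff_mult x y : differentiable_pt_lim (fun u v => u * v) x y y x.
Proof.
  intros eps; exists eps; intros u v Hu Hv.
  replace (u * v - x * y - (y * (u - x) + x * (v - y))) with ((u - x) * (v - y)) by ring.
  rewrite Rabs_mult.
  apply Rle_trans with (eps * Rabs (v - y)).
  apply Rmult_le_compat_r. apply Rabs_pos. lra.
  apply Rmult_le_compat_l. destruct eps; simpl; lra. apply Rmax_r.
Qed.

Lemma Cn_const n W c : Cn n W (fun _ _ => c).
Proof.
  revert c; induction n; intros c; simpl; auto.
  exists (fun _ _ => 0), (fun _ _ => 0); repeat split; auto.
  intros; apply diff_const.
Qed.

Lemma Cn_p1 n W : Cn n W (fun u _ => u).
Proof.
  destruct n; simpl; auto.
  exists (fun _ _ => 1), (fun _ _ => 0); repeat split; try apply Cn_const.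
  intros; apply diff_p1.
Qed.

Lemma Cn_p2 n W : Cn n W (fun _ v => v).
Proof.
  destruct n; simpl; auto.
  exists (fun _ _ => 0), (fun _ _ => 1); repeat split; try apply Cn_const.
  intros; apply diff_p2.
Qed.

Lemma Cn_plusf n W : Cn n W (fun u v => u + v).
Proof.
  destruct n; simpl; auto.
  exists (fun _ _ => 1), (fun _ _ => 1); repeat split; try apply Cn_const.
  intros; apply diff_plus.
Qed.

Lemma Cn_multf n W : Cn n W (fun u v => u * v).
Proof.
  destruct n; simpl; auto.
  exists (fun _ v => v), (fun u _ => u); repeat split; try apply Cn_p1; try apply Cn_p2.
  intros; apply diff_mult.
Qed.

Lemma Cn_S n : forall W g, Cn (S n) W g -> Cn n W g.
Proof.
  induction n; intros W g H; simpl; auto.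
  destruct H as (gx & gy & Hd & Hx & Hy).
  exists gx, gy; repeat split; auto.
Qed.

Lemma Cn_comp n : forall W W' g u v, Cn n W' g -> Cn n W u -> Cn n W v ->
  (forall x y, W x y -> W' (u x y) (v x y)) ->
  Cn n W (fun x y => g (u x y) (v x y)).
Proof.
  induction n; intros W W' g u v Hg Hu Hv HW; simpl; auto.
  destruct Hg as (gx & gy & Hgd & Hgx & Hgy).
  assert (Hu' := Cn_S _ _ _ Hu). assert (Hv' := Cn_S _ _ _ Hv).
  destruct Hu as (ux & uy & Hud & Hux & Huy).
  destruct Hv as (vx & vy & Hvd & Hvx & Hvy).
  assert (T : forall A B, Cn n W A -> Cn n W B -> Cn n W (fun x y => A x y + B x y)).
  { intros A B HA HB. apply (IHn W (fun _ _ => True) (fun a b => a + b)); auto. apply Cn_plusf. }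
  assert (M : forall A B, Cn n W A -> Cn n W B -> Cn n W (fun x y => A x y * B x y)).
  { intros A B HA HB. apply (IHn W (fun _ _ => True) (fun a b => a * b)); auto. apply Cn_multf. }
  exists (fun x y => gx (u x y) (v x y) * ux x y + gy (u x y) (v x y) * vx x y).
  exists (fun x y => gx (u x y) (v x y) * uy x y + gy (u x y) (v x y) * vy x y).
  repeat split.
  - intros x y Hxy. apply differentiable_pt_lim_comp; auto.
  - apply T; apply M; auto; apply (IHn W W'); auto.
  - apply T; apply M; auto; apply (IHn W W'); auto.
Qed.

Lemma locally_2d_impl (P Q : R -> R -> Prop) x y :
  (forall u v, P u v -> Q u v) -> locally_2d P x y -> locally_2d Q x y.
Proof. intros H [d Hd]; exists d; intros; auto. Qed.

Lemma Cn_ext n : forall W g h, Open2 W -> (forall x y, W x y -> g x y = h x y) ->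
  Cn n W g -> Cn n W h.
Proof.
  destruct n; intros W g h HO He Hg; simpl; auto.
  destruct Hg as (gx & gy & Hd & Hx & Hy).
  exists gx, gy; repeat split; auto.
  intros x y Hxy. apply differentiable_pt_lim_ext with g; auto.
  apply locally_2d_impl with W; auto.
Qed.

Lemma Cn_sub n : forall W W' g, (forall x y, W' x y -> W x y) -> Cn n W g -> Cn n W' g.
Proof.
  induction n; intros W W' g HW Hg; simpl; auto.
  destruct Hg as (gx & gy & Hd & Hx & Hy).
  exists gx, gy; repeat split; eauto.
Qed.

Lemma Sm_const W c : Smooth W (fun _ _ => c).
Proof. intro; apply Cn_const. Qed.
Lemma Sm_p1 W : Smooth W (fun u _ => u).
Proof. intro; apply Cn_p1. Qed.
Lemma Sm_p2 W : Smooth W (fun _ v => v).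
Proof. intro; apply Cn_p2. Qed.
Lemma Sm_comp W W' g u v : Smooth W' g -> Smooth W u -> Smooth W v ->
  (forall x y, W x y -> W' (u x y) (v x y)) ->
  Smooth W (fun x y => g (u x y) (v x y)).
Proof. intros; intro n; apply (Cn_comp n W W'); auto. Qed.
Lemma Sm_plus W A B : Smooth W A -> Smooth W B -> Smooth W (fun x y => A x y + B x y).
Proof. intros; apply (Sm_comp W (fun _ _ => True) (fun a b => a + b)); auto. intro; apply Cn_plusf. Qed.
Lemma Sm_mult W A B : Smooth W A -> Smooth W B -> Smooth W (fun x y => A x y * B x y).
Proof. intros; apply (Sm_comp W (fun _ _ => True) (fun a b => a * b)); auto. intro; apply Cn_multf. Qed.
Lemma Sm_ext W g h : Open2 W -> (forall x y, W x y -> g x y = h x y) -> Smooth W g -> Smooth W h.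
Proof. intros; intro n; apply Cn_ext with g; auto. Qed.
Lemma Sm_sub W W' g : (forall x y, W' x y -> W x y) -> Smooth W g -> Smooth W' g.
Proof. intros; intro n; apply Cn_sub with W; auto. Qed.
Lemma Sm_pow2 W m : Smooth W (fun _ v => v ^ m).
Proof.
  induction m; simpl. apply Sm_const. apply (Sm_mult W (fun _ v => v) (fun _ v => v ^ m)); auto. apply Sm_p2.
Qed.
Lemma Sm_pow1 W m : Smooth W (fun u _ => u ^ m).
Proof.
  induction m; simpl. apply Sm_const. apply (Sm_mult W (fun u _ => u) (fun u _ => u ^ m)); auto. apply Sm_p1.
Qed.
Lemma Sm_sum W (F : nat -> R -> R -> R) N : (forall i, Smooth W (F i)) ->
  Smooth W (fun x y => sum_n (fun i => F i x y) N).
Proof.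
  intros HF; induction N.
  - replace (fun x y => sum_n (fun i => F i x y) 0) with (F 0%nat); auto.
    apply functional_extensionality; intro x; apply functional_extensionality; intro y.
    rewrite sum_O; auto.
  - replace (fun x y => sum_n (fun i => F i x y) (S N)) with
      (fun x y => sum_n (fun i => F i x y) N + F (S N) x y).
    apply Sm_plus; auto.
    apply functional_extensionality; intro x; apply functional_extensionality; intro y.
    rewrite sum_Sn; auto.
Qed.

Lemma diff_dx g x y lx ly : differentiable_pt_lim g x y lx ly -> is_derive (fun t => g t y) x lx.
Proof.
  intros H. apply is_derive_Reals.
  assert (H1 := derivable_pt_lim_comp_2d g (fun t => t) (fun _ => y) x lx ly 1 0 H
     (derivable_pt_lim_id x) (derivable_pt_lim_const y x)).
  replace lx with (lx * 1 + ly * 0) by ring. exact H1.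
Qed.

Lemma diff_dy g x y lx ly : differentiable_pt_lim g x y lx ly -> is_derive (fun t => g x t) y ly.
Proof.
  intros H. apply is_derive_Reals.
  assert (H1 := derivable_pt_lim_comp_2d g (fun _ => x) (fun t => t) y lx ly 0 1 H
     (derivable_pt_lim_const x y) (derivable_pt_lim_id y)).
  replace ly with (lx * 0 + ly * 1) by ring. exact H1.
Qed.

Lemma Sm_unfold W g : Open2 W -> Smooth W g -> exists gx gy : R -> R -> R,
  (forall x y, W x y -> differentiable_pt_lim g x y (gx x y) (gy x y)) /\
  Smooth W gx /\ Smooth W gy.
Proof.
  intros HO H. destruct (H 1%nat) as (gx & gy & Hd & _ & _).
  exists gx, gy; split; [auto|split]; intro n;
  destruct (H (S n)) as (gx' & gy' & Hd' & Hx & Hy).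
  - apply Cn_ext with gx'; auto. intros x y Hxy.
    destruct (differentiable_pt_lim_unique _ _ _ _ _ (Hd' x y Hxy)) as [E1 E2].
    destruct (differentiable_pt_lim_unique _ _ _ _ _ (Hd x y Hxy)) as [E3 E4]. congruence.
  - apply Cn_ext with gy'; auto. intros x y Hxy.
    destruct (differentiable_pt_lim_unique _ _ _ _ _ (Hd' x y Hxy)) as [E1 E2].
    destruct (differentiable_pt_lim_unique _ _ _ _ _ (Hd x y Hxy)) as [E3 E4]. congruence.
Qed.

Lemma Cn_exdiff n : forall W g, Open2 W -> Cn (S n) W g -> forall x y, W x y -> ex_diff_n g n x y.
Proof.
  induction n; intros W g HO Hg x y Hxy; destruct Hg as (gx & gy & Hd & Hx & Hy).
  - simpl. split; auto. apply differentiable_continuity_pt. exists (gx x y), (gy x y). auto.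
  - simpl. split; [|split; [|split; [|split]]].
    + apply differentiable_continuity_pt. exists (gx x y), (gy x y). auto.
    + exists (gx x y). apply diff_dx with (gy x y); auto.
    + exists (gy x y). apply diff_dy with (gx x y); auto.
    + apply ex_diff_n_ext_loc with gx.
      * apply locally_2d_impl with W; auto. intros u v Huv. symmetry.
        apply is_derive_unique. apply diff_dx with (gy u v); auto.
      * apply IHn with W; auto.
    + apply ex_diff_n_ext_loc with gy.
      * apply locally_2d_impl with W; auto. intros u v Huv. symmetry.
        apply is_derive_unique. apply diff_dy with (gx u v); auto.
      * apply IHn with W; auto.
Qed.

Lemma interchange W K x0 m : Open2 W -> Smooth W K -> W x0 0 ->
  is_derive (fun x => Derive_n (fun l => K x l) m 0) x0
    (Derive_n (fun l => Derive (fun t => K t l) x0) m 0).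
Proof.
  intros HO HK Hx0.
  assert (HL : locally_2d (fun u v => ex_diff_n K (S m) u v) x0 0).
  { apply locally_2d_impl with W; auto. intros; apply Cn_exdiff with W; auto. }
  assert (HE : ex_derive (fun z => partial_derive 0 m K z 0) x0).
  { apply (ex_diff_n_ex_deriv_inf_1 (S m) 0 m); [lia|]. apply Cn_exdiff with W; auto. }
  assert (HD := Derive_partial_derive_aux1 m K x0 0 HL).
  unfold partial_derive in HE, HD. simpl in HE, HD.
  assert (HC := Derive_correct _ _ HE).
  rewrite HD in HC. exact HC.
Qed.

Lemma slice_loc W x y : Open2 W -> W x y -> locally y (fun z => W x z).
Proof.
  intros HO H. destruct (HO x y H) as [d Hd]. exists d. intros z Hz. apply Hd.
  rewrite Rminus_eq_0, Rabs_R0. apply cond_pos. exact Hz.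
Qed.


Lemma Dn_slice W g k : Open2 W -> Smooth W g -> exists gk, Smooth W gk /\
  forall x y, W x y -> Derive_n (fun z => g x z) k y = gk x y.
Proof.
  intros HO Hg. induction k.
  - exists g; split; auto.
  - destruct IHk as (gk & Hs & He).
    destruct (Sm_unfold W gk HO Hs) as (gx & gy & Hd & _ & Hgy).
    exists gy; split; auto. intros x y Hxy. simpl.
    rewrite (Derive_ext_loc _ (fun z => gk x z)).
    apply is_derive_unique. apply diff_dy with (gx x y); auto.
    apply filter_imp with (fun z => W x z); [|apply slice_loc; auto].
    intros; auto.
Qed.

Lemma exdn W g x y : Open2 W -> Smooth W g -> W x y -> forall k, ex_derive_n (fun z => g x z) k y.
Proof.
  intros HO Hg Hxy k. destruct k; simpl; auto.
  destruct (Dn_slice W g k HO Hg) as (gk & Hs & He).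
  destruct (Sm_unfold W gk HO Hs) as (gx & gy & Hd & _ & Hgy).
  apply ex_derive_ext_loc with (fun z => gk x z).
  apply filter_imp with (fun z => W x z); [|apply slice_loc; auto].
  intros; symmetry; auto.
  exists (gy x y). apply diff_dy with (gx x y); auto.
Qed.

Lemma Dn_plus W A B x y n : Open2 W -> Smooth W A -> Smooth W B -> W x y ->
  Derive_n (fun l => A x l + B x l) n y = Derive_n (fun l => A x l) n y + Derive_n (fun l => B x l) n y.
Proof.
  intros HO HA HB Hxy. apply Derive_n_plus.
  apply filter_imp with (fun z => W x z); [|apply slice_loc; auto]. intros; apply exdn with W; auto.
  apply filter_imp with (fun z => W x z); [|apply slice_loc; auto]. intros; apply exdn with W; auto.
Qed.

Lemma Dn_sum W (F : nat -> R -> R -> R) x y n N : Open2 W -> (forall i, Smooth W (F i)) -> W x y ->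
  Derive_n (fun l => sum_n (fun i => F i x l) N) n y = sum_n (fun i => Derive_n (fun l => F i x l) n y) N.
Proof.
  intros HO HF Hxy. induction N.
  - rewrite sum_O. apply Derive_n_ext. intros; rewrite sum_O; auto.
  - rewrite sum_Sn. rewrite (Derive_n_ext _ (fun l => sum_n (fun i => F i x l) N + F (S N) x l)).
    rewrite (Dn_plus W (fun x l => sum_n (fun i => F i x l) N) (F (S N))); auto.
    rewrite IHN; auto. apply Sm_sum; auto.
    intros; rewrite sum_Sn; auto.
Qed.

Lemma DnS f k x : Derive_n f (S k) x = Derive_n (Derive f) k x.
Proof.
  replace (S k) with (k + 1)%nat by lia. rewrite <- Derive_n_comp.
  apply Derive_n_ext. reflexivity.
Qed.

Lemma is_derive_Rmult f g x a b : is_derive f x a -> is_derive g x b ->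
  is_derive (fun t => f t * g t) x (a * g x + f x * b).
Proof. intros Ha Hb. exact (is_derive_mult f g x a b Ha Hb Rmult_comm). Qed.

Lemma is_derive_eq (f : R -> R) x l l' : is_derive f x l -> l = l' -> is_derive f x l'.
Proof. intros H <-; exact H. Qed.

Lemma is_derive_powid m l : is_derive (fun t => t ^ m) l (INR m * l ^ pred m).
Proof.
  eapply is_derive_eq. apply (is_derive_pow (fun t => t) m l 1 (is_derive_id l)).
  simpl; ring.
Qed.

Lemma vanish W k : forall m g x, Open2 W -> (k < m)%nat -> Smooth W g -> W x 0 ->
  Derive_n (fun l => l ^ m * g x l) k 0 = 0.
Proof.
  induction k; intros m g x HO Hkm Hg Hx.
  - simpl. rewrite pow_i; [ring|lia].
  - destruct m as [|m']; [lia|]. rewrite DnS.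
    destruct (Sm_unfold W g HO Hg) as (gx & gy & Hd & _ & Hgy).
    rewrite (Derive_n_ext_loc _ (fun l => l ^ m' * (INR (S m') * g x l + l * gy x l))).
    + apply (IHk m' (fun u v => INR (S m') * g u v + v * gy u v)); auto; [lia|].
      apply Sm_plus. apply (Sm_mult W (fun _ _ => INR (S m'))); auto; apply Sm_const.
      apply (Sm_mult W (fun _ v => v)); auto; apply Sm_p2.
    + apply filter_imp with (fun z => W x z); [|apply slice_loc; auto].
      intros l Hl. apply is_derive_unique.
      eapply is_derive_eq. apply is_derive_Rmult. apply is_derive_powid.
      apply (diff_dy _ _ _ _ _ (Hd x l Hl)).
      cbv beta. simpl pred. change (l ^ S m') with (l * l ^ m'). lra.
Qed.

Definition TT : R -> R -> Prop := fun _ _ => True.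

Lemma Sm_cont u x y : Smooth TT u -> continuity_2d_pt u x y.
Proof.
  intros H. destruct (H 1%nat) as (ux & uy & Hd & _ & _).
  apply differentiable_continuity_pt. exists (ux x y), (uy x y). apply Hd; exact I.
Qed.

Lemma Open_pre W0 u v : Open2 W0 -> Smooth TT u -> Smooth TT v ->
  Open2 (fun x y => W0 (u x y) (v x y)).
Proof.
  intros HO Hu Hv x y H. destruct (HO _ _ H) as [d Hd].
  destruct (Sm_cont u x y Hu d) as [d1 H1].
  destruct (Sm_cont v x y Hv d) as [d2 H2].
  assert (Hp : 0 < Rmin d1 d2) by (apply Rmin_pos; apply cond_pos).
  exists (mkposreal _ Hp). intros a b Ha Hb. simpl in Ha, Hb.
  apply Hd.
  apply H1; eapply Rlt_le_trans; eauto; try apply Rmin_l; apply Rmin_r.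
  apply H2; eapply Rlt_le_trans; eauto; try apply Rmin_l; apply Rmin_r.
Qed.

Lemma is_derive_idR (c : R) : is_derive (fun t : R => t) c 1.
Proof. apply is_derive_Reals. apply derivable_pt_lim_id. Qed.

Lemma is_derive_constR (a c : R) : is_derive (fun _ : R => a) c 0.
Proof. apply is_derive_Reals. apply derivable_pt_lim_const. Qed.

Lemma is_derive_cmul (a c : R) : is_derive (fun t => t * a) c a.
Proof. eapply is_derive_eq. apply (is_derive_Rmult (fun t => t) (fun _ => a) c 1 0).
  apply is_derive_idR. apply is_derive_constR. simpl; ring. Qed.

Lemma chain2 g a b t0 lx ly da db : differentiable_pt_lim g (a t0) (b t0) lx ly ->
  is_derive a t0 da -> is_derive b t0 db -> is_derive (fun t => g (a t) (b t)) t0 (lx * da + ly * db).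
Proof.
  intros H Ha Hb. apply is_derive_Reals. apply derivable_pt_lim_comp_2d; auto;
  apply is_derive_Reals; auto.
Qed.

Lemma jet WH H m k c : Open2 WH -> Smooth WH H -> WH 0 0 -> (k < m)%nat ->
  Derive_n (fun l => H l (c * l ^ m)) k 0 = Derive_n (fun l => H l 0) k 0.
Proof.
  intros HO HS H00 Hkm.
  set (WJ := fun c l => WH ((fun _ v => v) c l) ((fun u v => u * v ^ m) c l)).
  assert (OJ : Open2 WJ).
  { apply (Open_pre WH (fun _ v => v) (fun u v => u * v ^ m)); auto. apply Sm_p2. apply (Sm_mult TT (fun u _ => u) (fun _ v => v ^ m)).
    apply Sm_p1. apply Sm_pow2. }
  assert (SJ : Smooth WJ (fun c l => H l (c * l ^ m))).
  { apply (Sm_comp WJ WH H (fun _ v => v) (fun u v => u * v ^ m)); auto. apply Sm_p2.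
    apply (Sm_mult WJ (fun u _ => u) (fun _ v => v ^ m)). apply Sm_p1. apply Sm_pow2. }
  assert (W0c : forall c, WJ c 0).
  { intros c'. unfold WJ. rewrite pow_i; [|lia]. rewrite Rmult_0_r. exact H00. }
  destruct (Sm_unfold WH H HO HS) as (Hx & Hw & Hd & _ & Hsw).
  assert (Hder : forall c, is_derive (fun c => Derive_n (fun l => H l (c * l ^ m)) k 0) c 0).
  { intros c'. eapply is_derive_eq. apply (interchange WJ _ c' k OJ SJ (W0c c')).
    rewrite (Derive_n_ext_loc _ (fun l => l ^ m * Hw l (c' * l ^ m))).
    - apply (vanish WJ k m (fun c l => Hw l (c * l ^ m))); auto.
      apply (Sm_comp WJ WH Hw (fun _ v => v) (fun u v => u * v ^ m)); auto. apply Sm_p2.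
      apply (Sm_mult WJ (fun u _ => u) (fun _ v => v ^ m)). apply Sm_p1. apply Sm_pow2.
    - apply filter_imp with (fun z => WJ c' z); [|apply slice_loc; auto].
      intros l Hl. apply is_derive_unique. eapply is_derive_eq.
      apply (chain2 H (fun _ => l) (fun t => t * l ^ m)). apply Hd. exact Hl.
      apply is_derive_constR. apply is_derive_cmul. cbv beta; lra. }
  destruct (MVT_gen (fun c => Derive_n (fun l => H l (c * l ^ m)) k 0) 0 c (fun _ => 0)) as (xi & _ & E).
  - intros; apply Hder.
  - intros x _. apply derivable_continuous_pt. exists 0. apply is_derive_Reals. apply Hder.
  - rewrite <- (Derive_n_ext (fun l => H l (0 * l ^ m)) (fun l => H l 0)). cbv beta in E. rewrite Rmult_0_l in E. lra.
    intros; rewrite Rmult_0_l; auto.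
Qed.

Lemma sum_n_shift (a : nat -> R) n : sum_n a (S n) = a 0%nat + sum_n (fun k => a (S k)) n.
Proof.
  induction n. rewrite sum_Sn, !sum_O. reflexivity.
  rewrite sum_Sn, IHn, sum_Sn. simpl. Rring.
Qed.

Lemma P0 (Z : nat -> R) N : sum_n (fun i => Z i * 0 ^ i) N = Z 0%nat.
Proof.
  induction N. rewrite sum_O; simpl; ring.
  rewrite sum_Sn, IHN. simpl. Rring.
Qed.

Lemma P_deriv (Z : nat -> R) n l :
  is_derive (fun l => sum_n (fun i => Z i * l ^ i) (S n)) l
    (sum_n (fun i => INR (i + 1) * Z (i + 1)%nat * l ^ i) n).
Proof.
  eapply is_derive_eq. apply (is_derive_sum_n (fun i l => Z i * l ^ i) (S n) l
     (fun i => Z i * (INR i * l ^ pred i))).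
  intros k _. eapply is_derive_eq. apply (is_derive_Rmult (fun _ => Z k) (fun t => t ^ k)).
  apply is_derive_constR. apply is_derive_powid. cbv beta; lra.
  rewrite sum_n_shift. simpl pred. rewrite Rmult_0_l, Rmult_0_r, Rplus_0_l.
  apply sum_n_ext. intros k. replace (k + 1)%nat with (S k) by lia. cbv beta; lra.
Qed.

Lemma P_upd (Z : nat -> R) i z n l : (i <= n)%nat ->
  sum_n (fun j => upd Z i z j * l ^ j) n = sum_n (fun j => Z j * l ^ j) n + (z - Z i) * l ^ i.
Proof.
  intros Hi. induction n.
  - assert (i = 0%nat) by lia. subst. rewrite !sum_O. unfold upd. simpl. ring.
  - destruct (Nat.eq_dec i (S n)) as [->|Hne].
    + rewrite !sum_Sn. unfold upd at 2. rewrite Nat.eqb_refl.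
      rewrite (sum_n_ext_loc (fun j => upd Z (S n) z j * l ^ j) (fun j => Z j * l ^ j)).
      Rring.
      intros k Hk. unfold upd. replace (Nat.eqb k (S n)) with false; auto.
      symmetry; apply Nat.eqb_neq; lia.
    + rewrite !sum_Sn, IHn by lia. unfold upd at 1.
      replace (Nat.eqb (S n) i) with false. Rring.
      symmetry; apply Nat.eqb_neq; lia.
Qed.

Lemma Sm_polyl W (Z : nat -> R) N : Smooth W (fun _ l => sum_n (fun i => Z i * l ^ i) N).
Proof.
  apply (Sm_sum W (fun i _ l => Z i * l ^ i)). intros i.
  apply (Sm_mult W (fun _ _ => Z i) (fun _ l => l ^ i)). apply Sm_const. apply Sm_pow2.
Qed.

Lemma Sm_poly1 W (Z : nat -> R) N : Smooth W (fun l _ => sum_n (fun i => Z i * l ^ i) N).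
Proof.
  apply (Sm_sum W (fun i l _ => Z i * l ^ i)). intros i.
  apply (Sm_mult W (fun _ _ => Z i) (fun l _ => l ^ i)). apply Sm_const. apply Sm_pow1.
Qed.

Lemma sum_n_Rmult_l (a : R) (u : nat -> R) n : a * sum_n u n = sum_n (fun k => a * u k) n.
Proof. induction n. rewrite !sum_O; auto. rewrite !sum_Sn, <- IHn. Rring. Qed.

Lemma is_derive_affine (a b c x : R) : is_derive (fun t => a + (t - b) * c) x c.
Proof. auto_derive. auto. ring. Qed.

Lemma is_derive_addc (a c : R) : is_derive (fun t => a + t) c 1.
Proof. apply is_derive_Reals. replace 1 with (0 + 1) by ring.
  apply derivable_pt_lim_plus. apply derivable_pt_lim_const. apply derivable_pt_lim_id. Qed.
Lemma is_derive_addc' (a c : R) : is_derive (fun t => t + a) c 1.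
Proof. apply is_derive_Reals. replace 1 with (1 + 0) by ring.
  apply derivable_pt_lim_plus. apply derivable_pt_lim_id. apply derivable_pt_lim_const. Qed.

Lemma main_rec (f : R -> R -> R) (s : R) (Z : nat -> R) (W0 : R -> R -> Prop)
  (HO : Open2 W0) (HS : Smooth W0 f) (Hs : W0 s (Z 0%nat)) n : Ftr f (S n) s Z =
         / INR (S n) *
         (Derive (fun s' => Ftr f n s' Z) s +
          sum_n (fun i => INR (i + 1) * Z (i + 1)%nat *
                          Derive (fun z => Ftr f n s (upd Z i z)) (Z i)) n).
Proof.
  set (Pn := fun l : R => (sum_n (fun i => Z i * l ^ i) n : R)).
  set (P1 := fun l : R => (sum_n (fun i => Z i * l ^ i) (S n) : R)).
  set (Q := fun l : R => (sum_n (fun i => INR (i + 1) * Z (i + 1)%nat * l ^ i) n : R)).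
  destruct (Sm_unfold W0 f HO HS) as (fx & fy & Hd & Hfx & Hfy).
  set (Wl := fun x l : R => W0 ((fun _ l : R => s + l) x l) ((fun _ l : R => Pn l) x l)).
  assert (OWl : Open2 Wl).
  { apply (Open_pre W0 (fun _ l => s + l) (fun _ l => Pn l)); auto.
    apply (Sm_plus TT (fun _ _ => s) (fun _ l => l)). apply Sm_const. apply Sm_p2. apply Sm_polyl. }
  assert (Wl0 : Wl 0 0). { unfold Wl, Pn. rewrite P0, Rplus_0_r. exact Hs. }
  set (DA := Derive_n (fun l => fx (s + l) (Pn l)) n 0).
  set (DB := fun i => Derive_n (fun l => fy (s + l) (Pn l) * l ^ i) n 0).
  assert (LHS : Derive_n (fun l => f (s + l) (P1 l)) (S n) 0 =
      DA + sum_n (fun i => INR (i + 1) * Z (i + 1)%nat * DB i) n).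
  { rewrite DnS.
    set (Wh := fun x l : R => W0 ((fun _ l : R => s + l) x l) ((fun _ l : R => P1 l) x l)).
    assert (Su : forall W, Smooth W (fun _ l : R => s + l)).
    { intros W. apply (Sm_plus W (fun _ _ => s) (fun _ l => l)). apply Sm_const. apply Sm_p2. }
    assert (OWh : Open2 Wh).
    { apply (Open_pre W0 (fun _ l : R => s + l) (fun _ l : R => P1 l)); auto. apply Sm_polyl. }
    assert (Wh0 : Wh 0 0). { unfold Wh, P1. rewrite P0, Rplus_0_r. exact Hs. }
    rewrite (Derive_n_ext_loc _ (fun l => fx (s + l) (P1 l) * 1 + fy (s + l) (P1 l) * Q l)).
    2: { apply filter_imp with (fun z => Wh 0 z); [|apply slice_loc; auto].
         intros l Hl. apply is_derive_unique.
         apply (chain2 f (fun l => s + l) P1). apply Hd. exact Hl.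
         apply is_derive_addc. apply P_deriv. }
    set (H := fun l w : R => fx (s + l) (Pn l + w) * 1 + fy (s + l) (Pn l + w) * Q l).
    rewrite (Derive_n_ext _ (fun l => H l (Z (S n) * l ^ (S n)))).
    2: { intros l. unfold H, P1, Pn. rewrite sum_Sn. reflexivity. }
    set (WH := fun l w : R => W0 ((fun l _ : R => s + l) l w) ((fun l w : R => Pn l + w) l w)).
    assert (OWH : Open2 WH).
    { apply (Open_pre W0 (fun l _ : R => s + l) (fun l w : R => Pn l + w)); auto.
      apply (Sm_plus TT (fun _ _ => s) (fun l _ => l)). apply Sm_const. apply Sm_p1.
      apply (Sm_plus TT (fun l _ => Pn l) (fun _ w => w)). apply Sm_poly1. apply Sm_p2. }
    assert (SH : Smooth WH H).
    { assert (Hu : Smooth WH (fun l _ : R => s + l)).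
      { apply (Sm_plus WH (fun _ _ => s) (fun l _ => l)). apply Sm_const. apply Sm_p1. }
      assert (Hv : Smooth WH (fun l w : R => Pn l + w)).
      { apply (Sm_plus WH (fun l _ => Pn l) (fun _ w => w)). apply Sm_poly1. apply Sm_p2. }
      apply (Sm_plus WH (fun l w => fx (s + l) (Pn l + w) * 1) (fun l w => fy (s + l) (Pn l + w) * Q l)).
      apply (Sm_mult WH (fun l w => fx (s + l) (Pn l + w)) (fun _ _ => 1)).
      apply (Sm_comp WH W0 fx (fun l _ : R => s + l) (fun l w : R => Pn l + w)); auto. apply Sm_const.
      apply (Sm_mult WH (fun l w => fy (s + l) (Pn l + w)) (fun l _ => Q l)).
      apply (Sm_comp WH W0 fy (fun l _ : R => s + l) (fun l w : R => Pn l + w)); auto.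
      apply (Sm_poly1 WH (fun i => INR (i + 1) * Z (i + 1)%nat)). }
    assert (WH0 : WH 0 0). { unfold WH, Pn. rewrite P0, !Rplus_0_r. exact Hs. }
    rewrite (jet WH H (S n) n (Z (S n)) OWH SH WH0) by lia.
    rewrite (Derive_n_ext _ (fun l => fx (s + l) (Pn l) + sum_n (fun i => INR (i + 1) * Z (i + 1)%nat * (fy (s + l) (Pn l) * l ^ i)) n)).
    2: { intros l. unfold H, Q. rewrite Rplus_0_r, Rmult_1_r. f_equal.
         rewrite sum_n_Rmult_l. apply sum_n_ext. intros k. Rring. }
    assert (SA : Smooth Wl (fun _ l => fx (s + l) (Pn l))).
    { apply (Sm_comp Wl W0 fx (fun _ l : R => s + l) (fun _ l : R => Pn l)); auto. apply Sm_polyl. }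
    assert (SF : forall i, Smooth Wl (fun _ l => INR (i + 1) * Z (i + 1)%nat * (fy (s + l) (Pn l) * l ^ i))).
    { intros i. apply (Sm_mult Wl (fun _ _ => INR (i + 1) * Z (i + 1)%nat) (fun _ l => fy (s + l) (Pn l) * l ^ i)).
      apply Sm_const. apply (Sm_mult Wl (fun _ l => fy (s + l) (Pn l)) (fun _ l => l ^ i)).
      apply (Sm_comp Wl W0 fy (fun _ l : R => s + l) (fun _ l : R => Pn l)); auto. apply Sm_polyl.
      apply Sm_pow2. }
    etransitivity.
    apply (Dn_plus Wl (fun _ l => fx (s + l) (Pn l))
       (fun _ l => sum_n (fun i => INR (i + 1) * Z (i + 1)%nat * (fy (s + l) (Pn l) * l ^ i)) n) 0 0 n); auto.
    apply (Sm_sum Wl (fun i _ l => INR (i + 1) * Z (i + 1)%nat * (fy (s + l) (Pn l) * l ^ i))). exact SF.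
    f_equal.
    etransitivity.
    apply (Dn_sum Wl (fun i _ l => INR (i + 1) * Z (i + 1)%nat * (fy (s + l) (Pn l) * l ^ i)) 0 0 n n); auto.
    apply sum_n_ext. intros i. apply Derive_n_scal_l. }
  assert (RA : Derive (fun s' => Ftr f n s' Z) s = DA / INR (Factorial.fact n)).
  { unfold Ftr, Rdiv. rewrite Derive_scal_l. f_equal.
    set (W1 := fun x l : R => W0 ((fun x l : R => x + l) x l) ((fun _ l : R => Pn l) x l)).
    assert (OW1 : Open2 W1).
    { apply (Open_pre W0 (fun x l : R => x + l) (fun _ l : R => Pn l)); auto.
      apply (Sm_plus TT (fun x _ => x) (fun _ l => l)). apply Sm_p1. apply Sm_p2. apply Sm_polyl. }
    assert (SW1 : Smooth W1 (fun x l => f (x + l) (Pn l))).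
    { apply (Sm_comp W1 W0 f (fun x l : R => x + l) (fun _ l : R => Pn l)); auto.
      apply (Sm_plus W1 (fun x _ => x) (fun _ l => l)). apply Sm_p1. apply Sm_p2. apply Sm_polyl. }
    assert (W1s : W1 s 0). { unfold W1, Pn. rewrite P0, Rplus_0_r. exact Hs. }
    apply is_derive_unique. eapply is_derive_eq.
    apply (interchange W1 (fun x l => f (x + l) (Pn l)) s n OW1 SW1 W1s).
    apply Derive_n_ext_loc.
    apply filter_imp with (fun z => W1 s z); [|apply slice_loc; auto].
    intros l Hl. apply is_derive_unique. eapply is_derive_eq.
    apply (chain2 f (fun t => t + l) (fun _ => Pn l)). apply Hd. exact Hl.
    apply is_derive_addc'. apply is_derive_constR. Rring. }
  assert (RB : forall i, (i <= n)%nat -> Derive (fun z => Ftr f n s (upd Z i z)) (Z i) = DB i / INR (Factorial.fact n)).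
  { intros i Hi. unfold Ftr.
    rewrite (Derive_ext _ (fun z => Derive_n (fun l => f (s + l) (Pn l + (z - Z i) * l ^ i)) n 0 / INR (Factorial.fact n))).
    2: { intros z. f_equal. apply Derive_n_ext. intros l. rewrite P_upd; auto. }
    unfold Rdiv. rewrite Derive_scal_l. f_equal.
    set (W2 := fun z l : R => W0 ((fun _ l : R => s + l) z l) ((fun z l : R => Pn l + (z - Z i) * l ^ i) z l)).
    assert (Sv : forall W, Smooth W (fun z l : R => Pn l + (z - Z i) * l ^ i)).
    { intros W. apply (Sm_plus W (fun _ l => Pn l) (fun z l => (z - Z i) * l ^ i)). apply Sm_polyl.
      apply (Sm_mult W (fun z _ => z - Z i) (fun _ l => l ^ i)).
      apply (Sm_plus W (fun z _ => z) (fun _ _ => - Z i)). apply Sm_p1. apply Sm_const. apply Sm_pow2. }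
    assert (Su : forall W, Smooth W (fun _ l : R => s + l)).
    { intros W. apply (Sm_plus W (fun _ _ => s) (fun _ l => l)). apply Sm_const. apply Sm_p2. }
    assert (OW2 : Open2 W2).
    { apply (Open_pre W0 (fun _ l : R => s + l) (fun z l : R => Pn l + (z - Z i) * l ^ i)); auto. }
    assert (SW2 : Smooth W2 (fun z l => f (s + l) (Pn l + (z - Z i) * l ^ i))).
    { apply (Sm_comp W2 W0 f (fun _ l : R => s + l) (fun z l : R => Pn l + (z - Z i) * l ^ i)); auto. }
    assert (W2s : W2 (Z i) 0). { unfold W2, Pn. rewrite P0, Rplus_0_r, Rminus_eq_0, Rmult_0_l, Rplus_0_r. exact Hs. }
    apply is_derive_unique. eapply is_derive_eq.
    apply (interchange W2 (fun z l => f (s + l) (Pn l + (z - Z i) * l ^ i)) (Z i) n OW2 SW2 W2s).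
    apply Derive_n_ext_loc.
    apply filter_imp with (fun z => W2 (Z i) z); [|apply slice_loc; auto].
    intros l Hl. apply is_derive_unique. eapply is_derive_eq.
    apply (chain2 f (fun _ => s + l) (fun t => Pn l + (t - Z i) * l ^ i)). apply Hd. exact Hl.
    apply is_derive_constR. 
    apply is_derive_affine.
    cbv beta. rewrite Rminus_eq_0, Rmult_0_l, Rplus_0_r. Rring. }
  rewrite RA, (sum_n_ext_loc _ (fun i => INR (i + 1) * Z (i + 1)%nat * DB i * / INR (Factorial.fact n))).
  2: { intros i Hi. rewrite RB by auto. unfold Rdiv. Rring. }
  rewrite (sum_n_mult_r (/ INR (Factorial.fact n)) (fun i => INR (i + 1) * Z (i + 1)%nat * DB i)).
  change mult with Rmult.
  unfold Ftr. unfold P1 in LHS. rewrite LHS. 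
  replace (Factorial.fact (S n)) with (S n * Factorial.fact n)%nat by reflexivity. rewrite mult_INR.
  match goal with |- @eq _ ?a ?b => change (@eq R a b) end. change (@sum_n (Ring.AbelianMonoid R_Ring)) with (@sum_n R_AbelianMonoid). generalize (sum_n (fun i => INR (i + 1) * Z (i + 1)%nat * DB i) n); intro SS. field. split. apply INR_fact_neq_0. apply not_0_INR. lia.
Qed.


Lemma series_lim (a : nat -> R) (l : R) : is_series a l -> is_lim_seq (sum_n a) l.
Proof. intros H; exact H. Qed.
Lemma lim_series (a : nat -> R) (l : R) : is_lim_seq (sum_n a) l -> is_series a l.
Proof. intros H; exact H. Qed.

Lemma sum_n_nonneg (a : nat -> R) N : (forall n, 0 <= a n) -> 0 <= sum_n a N.
Proof. intros H; induction N. rewrite sum_O; auto. rewrite sum_Sn. change plus with Rplus. specialize (H (S N)); lra. Qed.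

Lemma Series_nonneg (a : nat -> R) : (forall n, 0 <= a n) -> ex_series a -> 0 <= Series a.
Proof.
  intros H He. apply (is_lim_seq_le (fun _ => 0) (sum_n a) 0 (Series a)).
  intros; apply sum_n_nonneg; auto. apply is_lim_seq_const. apply series_lim, Series_correct, He.
Qed.

Lemma sum_le_Series (a : nat -> R) N : (forall n, 0 <= a n) -> ex_series a -> sum_n a N <= Series a.
Proof.
  intros H He. rewrite (Series_incr_n a (S N)) by (auto; lia). simpl pred.
  rewrite <- sum_n_Reals. assert (0 <= Series (fun k => a (S N + k)%nat)).
  apply Series_nonneg; auto. apply ex_series_incr_n; auto. lra.
Qed.

Lemma term_le_sum (a : nat -> R) N : (forall n, 0 <= a n) -> a N <= sum_n a N.
Proof.
  intros H. destruct N. rewrite sum_O; lra. rewrite sum_Sn. change plus with Rplus.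
  assert (0 <= sum_n a N) by (apply sum_n_nonneg; auto). lra.
Qed.

Lemma term_le_Series (a : nat -> R) N : (forall n, 0 <= a n) -> ex_series a -> a N <= Series a.
Proof. intros. eapply Rle_trans. apply term_le_sum; auto. apply sum_le_Series; auto. Qed.

Lemma Rabs_sum_n (a : nat -> R) N : Rabs (sum_n a N) <= sum_n (fun k => Rabs (a k)) N.
Proof. rewrite !sum_n_Reals. apply Rsum_abs. Qed.

Lemma ex_series_dom (a b : nat -> R) : (forall n, Rabs (a n) <= b n) -> ex_series b -> ex_series a.
Proof. intros H Hb. apply (@ex_series_le R_AbsRing R_CompleteNormedModule a b); auto. Qed.

Lemma ex_series_abs_dom (a b : nat -> R) : (forall n, Rabs (a n) <= b n) -> ex_series b ->
  ex_series (fun n => Rabs (a n)).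
Proof. intros H Hb. apply (@ex_series_le R_AbsRing R_CompleteNormedModule _ b); auto. intros n. unfold norm; simpl. unfold abs; simpl.
  rewrite Rabs_Rabsolu; auto. Qed.

Lemma Series_abs_le (a b : nat -> R) : (forall n, Rabs (a n) <= b n) -> ex_series b ->
  Rabs (Series a) <= Series b.
Proof.
  intros H Hb. eapply Rle_trans. apply Series_Rabs. apply ex_series_abs_dom with b; auto.
  apply Series_le; auto. intros n; split; auto. apply Rabs_pos.
Qed.

Lemma series_dct (u : nat -> nat -> R) (B L : nat -> R) :
  (forall N j, Rabs (u N j) <= B j) -> ex_series B ->
  (forall j, is_lim_seq (fun N => u N j) (L j)) ->
  is_lim_seq (fun N => Series (u N)) (Series L).
Proof.
  intros Hb HS Hl.
  assert (HL : forall j, Rabs (L j) <= B j).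
  { intros j. assert (H := is_lim_seq_abs _ _ (Hl j)).
    apply (is_lim_seq_le _ _ _ _ (fun N => Hb N j) H (is_lim_seq_const (B j))). }
  assert (S0 : forall j, 0 <= B j). { intros j. eapply Rle_trans; [apply Rabs_pos| apply (HL j)]. }
  assert (HwS : forall N j, Rabs (u N j - L j) <= 2 * B j).
  { intros N j. eapply Rle_trans. apply Rabs_triang. rewrite Rabs_Ropp.
    specialize (Hb N j); specialize (HL j); lra. }
  assert (H2S : ex_series (fun j => 2 * B j)). { exact (@ex_series_scal_l R_AbsRing R_NormedModule 2 B HS). }
  apply is_lim_seq_spec. intros eps.
  assert (HSc := series_lim _ _ (Series_correct _ HS)).
  apply is_lim_seq_spec in HSc.
  assert (Heps4 : 0 < eps / 4) by (destruct eps; simpl; lra).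
  destruct (HSc (mkposreal _ Heps4)) as [J HJ]. simpl in HJ.
  assert (Hfin : is_lim_seq (fun N => sum_n (fun j => Rabs (u N j - L j)) J) 0).
  { assert (Hw : forall j, is_lim_seq (fun N => Rabs (u N j - L j)) 0).
    { intros j. replace 0 with (Rabs (L j - L j)). 
      apply (is_lim_seq_abs _ (L j - L j)). apply is_lim_seq_minus'; auto. apply is_lim_seq_const.
      rewrite Rminus_eq_0; apply Rabs_R0. }
    clear HJ. induction J.
    - eapply is_lim_seq_ext; [|apply (Hw 0%nat)]. intros; rewrite sum_O; auto.
    - replace 0 with (0 + 0) by ring. eapply is_lim_seq_ext; [|apply is_lim_seq_plus'; [apply IHJ| apply (Hw (S J))]].
      intros; rewrite sum_Sn; auto. }
  apply is_lim_seq_spec in Hfin.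
  assert (Heps2 : 0 < eps / 2) by (destruct eps; simpl; lra).
  destruct (Hfin (mkposreal _ Heps2)) as [N0 HN0]. simpl in HN0.
  exists N0. intros N HN. specialize (HN0 N HN). rewrite Rminus_0_r, Rabs_pos_eq in HN0
    by (apply sum_n_nonneg; intros; apply Rabs_pos).
  assert (Eu : ex_series (u N)). { apply ex_series_dom with B; auto. }
  assert (EL : ex_series L). { apply ex_series_dom with B; auto. }
  rewrite <- Series_minus by auto.
  eapply Rle_lt_trans. apply (Series_abs_le _ (fun j => Rabs (u N j - L j))).
  intros; apply Rle_refl. apply ex_series_dom with (fun j => 2 * B j); auto.
  intros; rewrite Rabs_Rabsolu; auto.
  assert (Ew : ex_series (fun j => Rabs (u N j - L j))).
  { apply ex_series_dom with (fun j => 2 * B j); auto. intros; rewrite Rabs_Rabsolu; auto. }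
  rewrite (Series_incr_n _ (S J)) by (auto; lia). simpl pred. rewrite <- sum_n_Reals.
  assert (Tw : Series (fun k => Rabs (u N (S J + k)%nat - L (S J + k)%nat)) <=
               Series (fun k => 2 * B (S J + k)%nat)).
  { apply Series_le. intros; split; auto. apply Rabs_pos. apply ex_series_incr_n with (n := S J) (a := fun j => 2 * B j); auto. }
  rewrite Series_scal_l in Tw.
  assert (ES : Series B = sum_n B J + Series (fun k => B (S J + k)%nat)).
  { rewrite (Series_incr_n _ (S J)) by (auto; lia). simpl pred. rewrite <- sum_n_Reals. auto. }
  specialize (HJ J (le_n J)).
  apply Rabs_lt_between in HJ. destruct eps as [e He]; simpl in *. lra.
Qed.

Lemma fubini (a : nat -> nat -> R) :
  (forall j, ex_series (fun k => Rabs (a j k))) ->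
  ex_series (fun j => Series (fun k => Rabs (a j k))) ->
  is_series (fun k => Series (fun j => a j k)) (Series (fun j => Series (fun k => a j k))).
Proof.
  intros H1 H2. apply lim_series.
  set (B := fun j => Series (fun k => Rabs (a j k))).
  assert (S0 : forall j k, Rabs (a j k) <= B j).
  { intros j k. apply (term_le_Series (fun k => Rabs (a j k))); auto. intros; apply Rabs_pos. }
  assert (HD := series_dct (fun N j => sum_n (a j) N) B (fun j => Series (a j))).
  eapply is_lim_seq_ext; [|apply HD].
  - intros N. induction N.
    + rewrite sum_O. apply Series_ext; intros; rewrite sum_O; auto.
    + rewrite sum_Sn, <- IHN. change plus with Rplus.
      rewrite <- Series_plus. apply Series_ext; intros; rewrite sum_Sn; auto.
      apply ex_series_dom with B; auto. intros j. eapply Rle_trans. apply Rabs_sum_n.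
      apply sum_le_Series; auto. intros; apply Rabs_pos.
      apply ex_series_dom with B; auto.
  - intros N j. eapply Rle_trans. apply Rabs_sum_n. apply sum_le_Series; auto. intros; apply Rabs_pos.
  - exact H2.
  - intros j. apply series_lim, Series_correct. apply ex_series_Rabs; auto.
Qed.

Lemma fubini_eq (a : nat -> nat -> R) :
  (forall j, ex_series (fun k => Rabs (a j k))) ->
  ex_series (fun j => Series (fun k => Rabs (a j k))) ->
  Series (fun j => Series (fun k => a j k)) = Series (fun k => Series (fun j => a j k)).
Proof. intros; symmetry; apply is_series_unique, fubini; auto. Qed.

Lemma fubini_abs (a : nat -> nat -> R) :
  (forall j, ex_series (fun k => Rabs (a j k))) ->
  ex_series (fun j => Series (fun k => Rabs (a j k))) ->
  (forall k, ex_series (fun j => Rabs (a j k))) /\ ex_series (fun k => Series (fun j => Rabs (a j k))).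
Proof.
  intros H1 H2. split.
  - intros k. apply ex_series_abs_dom with (fun j => Series (fun k => Rabs (a j k))); auto.
    intros j. apply (term_le_Series (fun k => Rabs (a j k))); auto. intros; apply Rabs_pos.
  - eexists. apply (fubini (fun j k => Rabs (a j k))).
    intros j; eapply ex_series_ext; [|apply (H1 j)]. intros; rewrite Rabs_Rabsolu; auto.
    eapply ex_series_ext; [|apply H2]. intros; apply Series_ext; intros; rewrite Rabs_Rabsolu; auto.
Qed.

Definition good (c : nat -> nat -> R) (r : R) := forall rho, 0 < rho < r ->
  (forall j, ex_series (fun k => Rabs (c j k) * rho ^ k)) /\
  ex_series (fun j => Series (fun k => Rabs (c j k) * rho ^ k) * rho ^ j).

Definition Fd (c : nat -> nat -> R) (x z : R) := Series (fun j => Series (fun k => c j k * x ^ j * z ^ k)).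
Definition cX (c : nat -> nat -> R) j k := INR (S j) * c (S j) k.
Definition cT (c : nat -> nat -> R) j k := c k j.
Definition cZ (c : nat -> nat -> R) j k := INR (S k) * c j (S k).

Lemma Series_pos' (a : nat -> R) : (forall n, 0 <= a n) -> ex_series a -> Rabs (Series a) = Series a.
Proof. intros; apply Rabs_pos_eq, Series_nonneg; auto. Qed.

Lemma good_abs c r rho x z : good c r -> 0 < rho < r -> Rabs x <= rho -> Rabs z <= rho ->
  (forall j, ex_series (fun k => Rabs (c j k * x ^ j * z ^ k))) /\
  ex_series (fun j => Series (fun k => Rabs (c j k * x ^ j * z ^ k))) /\
  (forall j, Series (fun k => Rabs (c j k * x ^ j * z ^ k)) <= Series (fun k => Rabs (c j k) * rho ^ k) * rho ^ j).
Proof.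
  intros Hg Hr Hx Hz. destruct (Hg rho Hr) as [H1 H2].
  assert (Tb : forall j k, Rabs (c j k * x ^ j * z ^ k) <= Rabs (c j k) * rho ^ k * rho ^ j).
  { intros j k. rewrite !Rabs_mult, <- !RPow_abs.
    assert (0 <= Rabs x ^ j <= rho ^ j) by (split; [apply pow_le, Rabs_pos| apply pow_incr; split; auto; apply Rabs_pos]).
    assert (0 <= Rabs z ^ k <= rho ^ k) by (split; [apply pow_le, Rabs_pos| apply pow_incr; split; auto; apply Rabs_pos]).
    assert (0 <= Rabs (c j k)) by apply Rabs_pos.
    replace (Rabs (c j k) * rho ^ k * rho ^ j) with (Rabs (c j k) * rho ^ j * rho ^ k) by ring.
    apply Rmult_le_compat. apply Rmult_le_pos; tauto. tauto. apply Rmult_le_compat_l; tauto. tauto. }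
  assert (E1 : forall j, ex_series (fun k => Rabs (c j k * x ^ j * z ^ k))).
  { intros j. apply ex_series_dom with (fun k => Rabs (c j k) * rho ^ k * rho ^ j).
    intros k; rewrite Rabs_Rabsolu; auto. apply ex_series_scal_r; auto. }
  assert (E3 : forall j, Series (fun k => Rabs (c j k * x ^ j * z ^ k)) <= Series (fun k => Rabs (c j k) * rho ^ k) * rho ^ j).
  { intros j. rewrite <- Series_scal_r. apply Series_le. intros k; split; [apply Rabs_pos| auto].
    apply ex_series_scal_r; auto. }
  split; [auto| split; auto].
  apply ex_series_dom with (fun j => Series (fun k => Rabs (c j k) * rho ^ k) * rho ^ j); auto.
  intros j. rewrite Series_pos'; auto. intros; apply Rabs_pos.
Qed.

Lemma Fd_bound c r rho x z : good c r -> 0 < rho < r -> Rabs x <= rho -> Rabs z <= rho ->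
  Rabs (Fd c x z) <= Series (fun j => Series (fun k => Rabs (c j k) * rho ^ k) * rho ^ j).
Proof.
  intros Hg Hr Hx Hz. destruct (good_abs c r rho x z Hg Hr Hx Hz) as (E1 & E2 & E3).
  unfold Fd. apply Series_abs_le; [| apply (proj2 (Hg rho Hr))].
  intros j. eapply Rle_trans; [|apply E3]. apply Series_abs_le; auto. intros; apply Rle_refl.
Qed.

Lemma rho_mid x z r : Rabs x < r -> Rabs z < r ->
  0 < (Rmax (Rabs x) (Rabs z) + r) / 2 < r /\ Rabs x < (Rmax (Rabs x) (Rabs z) + r) / 2 /\
  Rabs z < (Rmax (Rabs x) (Rabs z) + r) / 2.
Proof.
  intros Hx Hz. assert (H1 := Rmax_l (Rabs x) (Rabs z)). assert (H2 := Rmax_r (Rabs x) (Rabs z)).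
  assert (Rmax (Rabs x) (Rabs z) < r) by (apply Rmax_lub_lt; auto).
  assert (0 <= Rabs x) by apply Rabs_pos. lra.
Qed.

Lemma good_T c r : good c r -> good (cT c) r.
Proof.
  intros Hg rho Hr. unfold cT.
  assert (Hx : Rabs rho <= rho) by (rewrite Rabs_pos_eq; lra).
  destruct (good_abs c r rho rho rho Hg Hr Hx Hx) as (E1 & E2 & _).
  destruct (fubini_abs _ E1 E2) as [F1 F2].
  assert (Hp : forall k, 0 < rho ^ k) by (intros; apply pow_lt; lra).
  assert (Eq : forall j k, Rabs (c k j * rho ^ k * rho ^ j) = Rabs (c k j) * rho ^ k * rho ^ j).
  { intros. rewrite !Rabs_mult, (Rabs_pos_eq (rho ^ k)), (Rabs_pos_eq (rho ^ j)) by (apply Rlt_le, Hp). auto. }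
  split.
  - intros j. eapply ex_series_ext; [| apply (ex_series_scal_r (/ rho ^ j) _ (F1 j))].
    intros k. cbv beta. rewrite Eq. toR. field. apply Rgt_not_eq, Hp.
  - eapply ex_series_ext; [|apply F2]. intros j. rewrite <- Series_scal_r.
    apply Series_ext. intros k. rewrite Eq. ring.
Qed.

Lemma Fd_T c r x z : good c r -> Rabs x < r -> Rabs z < r -> Fd c x z = Fd (cT c) z x.
Proof.
  intros Hg Hx Hz. destruct (rho_mid x z r Hx Hz) as (Hr & H1 & H2).
  destruct (good_abs c r _ x z Hg Hr (Rlt_le _ _ H1) (Rlt_le _ _ H2)) as (E1 & E2 & _).
  unfold Fd, cT. rewrite (fubini_eq _ E1 E2). apply Series_ext; intros k. apply Series_ext; intros j. ring.
Qed.

Lemma cv_bound q k : 0 <= q < 1 -> INR (S k) * q ^ k <= / (1 - q).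
Proof.
  intros Hq. induction k.
  - simpl. rewrite Rmult_1_l. apply Rmult_le_reg_l with (1 - q). lra.
    rewrite Rinv_r by lra. lra.
  - rewrite S_INR. simpl pow.
    assert (Hp : q ^ k <= 1). { rewrite <- (pow1 k). apply pow_incr; lra. }
    assert (H0 : 0 <= q ^ k) by (apply pow_le; lra).
    assert (E : / (1 - q) = q * / (1 - q) + 1) by (field; lra).
    rewrite E. assert (0 <= q) by lra. nra.
Qed.

Lemma good_X c r : good c r -> good (cX c) r.
Proof.
  intros Hg rho Hr. unfold cX.
  set (rho' := (rho + r) / 2). assert (Hr' : 0 < rho' < r) by (unfold rho'; lra).
  assert (Hrr : rho < rho') by (unfold rho'; lra).
  destruct (Hg rho Hr) as [A1 A2]. destruct (Hg rho' Hr') as [B1 B2].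
  assert (Ei : forall j, ex_series (fun k => Rabs (INR (S j) * c (S j) k) * rho ^ k)).
  { intros j. eapply ex_series_ext; [|apply (ex_series_scal_l (INR (S j)) _ (A1 (S j)))].
    intros k. rewrite Rabs_mult, (Rabs_pos_eq (INR (S j))) by apply pos_INR.
    unfold scal; simpl; unfold mult; simpl. ring. }
  split; auto.
  set (q := rho / rho'). assert (Hq : 0 <= q < 1).
  { unfold q. split. apply Rlt_le, Rdiv_lt_0_compat; lra. apply Rmult_lt_reg_r with rho'. lra.
    replace (rho / rho' * rho') with rho by (field; lra). unfold rho'; lra. }
  apply ex_series_dom with (fun j => (/ (1 - q) * / rho') * (Series (fun k => Rabs (c (S j) k) * rho' ^ k) * rho' ^ (S j))).
  - intros j. rewrite Rabs_pos_eq.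
    2: { apply Rmult_le_pos. apply Series_nonneg; auto. intros; apply Rmult_le_pos. apply Rabs_pos.
         apply pow_le; lra. apply pow_le; lra. }
    rewrite (Series_ext _ (fun k => INR (S j) * (Rabs (c (S j) k) * rho ^ k))).
    2: { intros k. rewrite Rabs_mult, (Rabs_pos_eq (INR (S j))) by apply pos_INR. ring. }
    rewrite Series_scal_l.
    assert (Hb : Series (fun k => Rabs (c (S j) k) * rho ^ k) <= Series (fun k => Rabs (c (S j) k) * rho' ^ k)).
    { apply Series_le; auto. intros k; split. apply Rmult_le_pos. apply Rabs_pos. apply pow_le; lra.
      apply Rmult_le_compat_l. apply Rabs_pos. apply pow_incr; lra. }
    assert (Hb0 : 0 <= Series (fun k => Rabs (c (S j) k) * rho ^ k)).
    { apply Series_nonneg; auto. intros; apply Rmult_le_pos. apply Rabs_pos. apply pow_le; lra. }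
    assert (Hc := cv_bound q j Hq).
    assert (Erho : rho ^ j = q ^ j * rho' ^ j).
    { rewrite <- Rpow_mult_distr. f_equal. unfold q. field. lra. }
    rewrite Erho. simpl pow.
    assert (0 <= q ^ j) by (apply pow_le; lra). assert (0 < rho' ^ j) by (apply pow_lt; lra).
    assert (0 <= INR (S j)) by apply pos_INR.
    replace (/ (1 - q) * / rho' * (Series (fun k => Rabs (c (S j) k) * rho' ^ k) * (rho' * rho' ^ j)))
      with (/ (1 - q) * (Series (fun k => Rabs (c (S j) k) * rho' ^ k) * rho' ^ j)) by (field; lra).
    replace (INR (S j) * Series (fun k => Rabs (c (S j) k) * rho ^ k) * (q ^ j * rho' ^ j)) with
      ((INR (S j) * q ^ j) * (Series (fun k => Rabs (c (S j) k) * rho ^ k) * rho' ^ j)) by ring.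
    apply Rmult_le_compat; auto. apply Rmult_le_pos; auto. apply Rmult_le_pos; lra.
    apply Rmult_le_compat_r; lra.
  - apply (@ex_series_scal_l R_AbsRing R_NormedModule). apply (ex_series_incr_n _ 1) in B2. exact B2.
Qed.

Lemma cZ_eq c : cZ c = cT (cX (cT c)).
Proof. reflexivity. Qed.

Lemma good_Z c r : good c r -> good (cZ c) r.
Proof. intros H. rewrite cZ_eq. apply good_T, good_X, good_T, H. Qed.

Lemma Fd_dx c r x z : good c r -> Rabs x < r -> Rabs z < r ->
  is_derive (fun t => Fd c t z) x (Fd (cX c) x z).
Proof.
  intros Hg Hx Hz. destruct (rho_mid x z r Hx Hz) as (Hr & H1 & H2).
  set (rho := (Rmax (Rabs x) (Rabs z) + r) / 2) in *.
  destruct (Hg rho Hr) as [A1 A2].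
  set (b := fun j => Series (fun k => c j k * z ^ k)).
  assert (Eq : forall t, Fd c t z = PSeries b t).
  { intros t. unfold Fd, PSeries, b. apply Series_ext; intros j. rewrite <- Series_scal_r.
    apply Series_ext; intros k. ring. }
  assert (Hb : forall j, Rabs (b j) <= Series (fun k => Rabs (c j k) * rho ^ k)).
  { intros j. apply Series_abs_le; auto. intros k. rewrite Rabs_mult, <- RPow_abs.
    apply Rmult_le_compat_l. apply Rabs_pos. apply pow_incr; split; [apply Rabs_pos| lra]. }
  assert (Hcv : Rbar_le rho (CV_radius b)).
  { apply (proj1 (CV_radius_bounded b)).
    exists (Series (fun j => Series (fun k => Rabs (c j k) * rho ^ k) * rho ^ j)).
    intros n. rewrite Rabs_mult, <- RPow_abs, (Rabs_pos_eq rho) by lra.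
    eapply Rle_trans.
    2: { apply (term_le_Series (fun j => Series (fun k => Rabs (c j k) * rho ^ k) * rho ^ j) n); auto.
         intros j. apply Rmult_le_pos. apply Series_nonneg; auto. intros; apply Rmult_le_pos.
         apply Rabs_pos. apply pow_le; lra. apply pow_le; lra. }
    apply Rmult_le_compat_r. apply pow_le; lra. auto. }
  assert (Hlt : Rbar_lt (Rabs x) (CV_radius b)).
  { apply Rbar_lt_le_trans with (Finite rho); auto. }
  eapply is_derive_ext. intros t; symmetry; apply Eq.
  eapply is_derive_eq. apply is_derive_PSeries; auto.
  unfold PSeries, PS_derive, Fd, cX, b. apply Series_ext; intros j.
  rewrite <- Series_scal_l, <- Series_scal_r. apply Series_ext; intros k. ring.
Qed.

Lemma Fd_dz c r x z : good c r -> Rabs x < r -> Rabs z < r ->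
  is_derive (fun t => Fd c x t) z (Fd (cZ c) x z).
Proof.
  intros Hg Hx Hz. apply is_derive_ext_loc with (fun t => Fd (cT c) t x).
  - assert (Hp : 0 < r - Rabs z) by lra. exists (mkposreal _ Hp). intros t Ht.
    change (Rabs (t - z) < r - Rabs z) in Ht. symmetry. apply Fd_T with r; auto.
    assert (Rabs t <= Rabs (t - z) + Rabs z). { replace t with ((t - z) + z) at 1 by ring. apply Rabs_triang. }
    lra.
  - eapply is_derive_eq. apply Fd_dx with r; auto. apply good_T; auto.
    rewrite cZ_eq. apply Fd_T with r; auto. apply good_X, good_T; auto.
Qed.

Lemma between_abs a b t : Rmin a b <= t <= Rmax a b -> Rabs (t - a) <= Rabs (b - a).
Proof. intros H. unfold Rmin, Rmax in H. destruct (Rle_dec a b); split_Rabs; lra. Qed.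

Lemma lip1 f df a b M : (forall t, Rmin a b <= t <= Rmax a b -> is_derive f t (df t) /\ Rabs (df t) <= M) ->
  Rabs (f b - f a) <= M * Rabs (b - a).
Proof.
  intros H. destruct (MVT_gen f a b df) as (c & Hc & E).
  - intros t Ht. apply H. lra.
  - intros t Ht. apply derivable_continuous_pt. exists (df t). apply is_derive_Reals. apply H; auto.
  - rewrite E, Rabs_mult. apply Rmult_le_compat_r. apply Rabs_pos. apply H; auto.
Qed.

Lemma cont_bd g gx gy x0 y0 d M : 0 < d ->
  (forall x y, Rabs (x - x0) < d -> Rabs (y - y0) < d ->
     is_derive (fun t => g t y) x (gx x y) /\ is_derive (fun t => g x t) y (gy x y) /\
     Rabs (gx x y) <= M /\ Rabs (gy x y) <= M) ->
  continuity_2d_pt g x0 y0.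
Proof.
  intros Hd H eps.
  assert (HM : 0 <= M).
  { destruct (H x0 y0) as (_ & _ & HM & _). rewrite Rminus_eq_0, Rabs_R0; lra.
    rewrite Rminus_eq_0, Rabs_R0; lra. eapply Rle_trans; [apply Rabs_pos| exact HM]. }
  set (M' := M + 1).
  assert (Hp : 0 < Rmin d (eps / (2 * M'))).
  { apply Rmin_pos; auto. apply Rdiv_lt_0_compat. destruct eps; simpl; lra. unfold M'; lra. }
  exists (mkposreal _ Hp). intros u v Hu Hv. simpl in Hu, Hv.
  assert (Hud := Rlt_le_trans _ _ _ Hu (Rmin_l _ _)). assert (Hvd := Rlt_le_trans _ _ _ Hv (Rmin_l _ _)).
  assert (Hue := Rlt_le_trans _ _ _ Hu (Rmin_r _ _)). assert (Hve := Rlt_le_trans _ _ _ Hv (Rmin_r _ _)).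
  assert (P1 : Rabs (g u v - g x0 v) <= M * Rabs (u - x0)).
  { apply (lip1 (fun t => g t v) (fun t => gx t v)). intros t Ht.
    assert (Rabs (t - x0) <= Rabs (u - x0)) by (apply between_abs; auto).
    destruct (H t v) as (A & _ & B & _); auto; lra. }
  assert (P2 : Rabs (g x0 v - g x0 y0) <= M * Rabs (v - y0)).
  { apply (lip1 (fun t => g x0 t) (fun t => gy x0 t)). intros t Ht.
    assert (Rabs (t - y0) <= Rabs (v - y0)) by (apply between_abs; auto).
    destruct (H x0 t) as (_ & A & _ & B); auto. rewrite Rminus_eq_0, Rabs_R0; lra. lra. }
  replace (g u v - g x0 y0) with ((g u v - g x0 v) + (g x0 v - g x0 y0)) by ring.
  eapply Rle_lt_trans. apply Rabs_triang.
  assert (M * Rabs (u - x0) <= M' * Rabs (u - x0)) by (apply Rmult_le_compat_r; [apply Rabs_pos| unfold M'; lra]).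
  assert (M * Rabs (v - y0) <= M' * Rabs (v - y0)) by (apply Rmult_le_compat_r; [apply Rabs_pos| unfold M'; lra]).
  assert (HM' : 0 < M') by (unfold M'; lra).
  assert (M' * Rabs (u - x0) < M' * (eps / (2 * M'))) by (apply Rmult_lt_compat_l; auto).
  assert (M' * Rabs (v - y0) < M' * (eps / (2 * M'))) by (apply Rmult_lt_compat_l; auto).
  assert (E : M' * (eps / (2 * M')) = eps / 2) by (field; lra).
  lra.
Qed.

Lemma diff_part g gx gy x0 y0 d : 0 < d ->
  (forall x y, Rabs (x - x0) < d -> Rabs (y - y0) < d -> is_derive (fun t => g t y) x (gx x y)) ->
  is_derive (fun t => g x0 t) y0 (gy x0 y0) ->
  continuity_2d_pt gx x0 y0 ->
  differentiable_pt_lim g x0 y0 (gx x0 y0) (gy x0 y0).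
Proof.
  intros Hd Hx Hy Hc eps.
  assert (He2 : 0 < eps / 2) by (destruct eps; simpl; lra).
  destruct (Hc (mkposreal _ He2)) as [d1 Hd1]. simpl in Hd1.
  apply is_derive_Reals in Hy. destruct (Hy _ He2) as [d2 Hd2].
  assert (Hp : 0 < Rmin d (Rmin d1 d2)).
  { apply Rmin_pos; auto. apply Rmin_pos; apply cond_pos. }
  exists (mkposreal _ Hp). intros u v Hu Hv. simpl in Hu, Hv.
  assert (Hu1 : Rabs (u - x0) < d) by (eapply Rlt_le_trans; [apply Hu| apply Rmin_l]).
  assert (Hv1 : Rabs (v - y0) < d) by (eapply Rlt_le_trans; [apply Hv| apply Rmin_l]).
  assert (Hu2 : Rabs (u - x0) < d1) by (eapply Rlt_le_trans; [apply Hu| eapply Rle_trans; [apply Rmin_r| apply Rmin_l]]).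
  assert (Hv2 : Rabs (v - y0) < d1) by (eapply Rlt_le_trans; [apply Hv| eapply Rle_trans; [apply Rmin_r| apply Rmin_l]]).
  assert (Hv3 : Rabs (v - y0) < d2) by (eapply Rlt_le_trans; [apply Hv| eapply Rle_trans; [apply Rmin_r| apply Rmin_r]]).
  assert (P1 : Rabs ((g u v - gx x0 y0 * u) - (g x0 v - gx x0 y0 * x0)) <= eps / 2 * Rabs (u - x0)).
  { apply (lip1 (fun t => g t v - gx x0 y0 * t) (fun t => gx t v - gx x0 y0)). intros t Ht.
    assert (Rabs (t - x0) <= Rabs (u - x0)) by (apply between_abs; auto).
    split.
    - eapply is_derive_eq. apply is_derive_Reals. apply derivable_pt_lim_minus.
      apply is_derive_Reals. apply Hx; lra. apply derivable_pt_lim_scal. apply derivable_pt_lim_id. toR; ring.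
    - apply Rlt_le. apply Hd1; lra. }
  assert (P2 : Rabs (g x0 v - g x0 y0 - gy x0 y0 * (v - y0)) <= eps / 2 * Rabs (v - y0)).
  { destruct (Req_dec v y0) as [->|Hne].
    - rewrite !Rminus_eq_0, Rmult_0_r, Rminus_0_r, Rabs_R0. lra.
    - assert (Hh : v - y0 <> 0) by lra.
      specialize (Hd2 (v - y0) Hh Hv3). replace (y0 + (v - y0)) with v in Hd2 by ring.
      replace (g x0 v - g x0 y0 - gy x0 y0 * (v - y0)) with
        (((g x0 v - g x0 y0) / (v - y0) - gy x0 y0) * (v - y0)) by (field; auto).
      rewrite Rabs_mult. apply Rmult_le_compat_r. apply Rabs_pos. lra. }
  replace (g u v - g x0 y0 - (gx x0 y0 * (u - x0) + gy x0 y0 * (v - y0))) with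
    (((g u v - gx x0 y0 * u) - (g x0 v - gx x0 y0 * x0)) + (g x0 v - g x0 y0 - gy x0 y0 * (v - y0))) by ring.
  eapply Rle_trans. apply Rabs_triang.
  assert (Rabs (u - x0) <= Rmax (Rabs (u - x0)) (Rabs (v - y0))) by apply Rmax_l.
  assert (Rabs (v - y0) <= Rmax (Rabs (u - x0)) (Rabs (v - y0))) by apply Rmax_r.
  assert (eps / 2 * Rabs (u - x0) <= eps / 2 * Rmax (Rabs (u - x0)) (Rabs (v - y0))) by (apply Rmult_le_compat_l; lra).
  assert (eps / 2 * Rabs (v - y0) <= eps / 2 * Rmax (Rabs (u - x0)) (Rabs (v - y0))) by (apply Rmult_le_compat_l; lra).
  lra.
Qed.

Definition sq (r : R) := fun x y => Rabs x < r /\ Rabs y < r.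

Lemma Fd_Cn r n : forall c, good c r -> Cn n (sq r) (Fd c).
Proof.
  induction n; intros c Hg; simpl; auto.
  exists (Fd (cX c)), (Fd (cZ c)). split; [| split; apply IHn; [apply good_X| apply good_Z]; auto].
  intros x y [Hx Hy]. destruct (rho_mid x y r Hx Hy) as (Hr & H1 & H2).
  set (m := Rmax (Rabs x) (Rabs y)) in *. set (rho := (m + r) / 2) in *.
  assert (Hm : m < r) by (unfold m; apply Rmax_lub_lt; auto).
  assert (Hmx : Rabs x <= m) by apply Rmax_l. assert (Hmy : Rabs y <= m) by apply Rmax_r.
  assert (Hd : 0 < (r - m) / 2) by lra.
  assert (Hin : forall u v, Rabs (u - x) < (r - m) / 2 -> Rabs (v - y) < (r - m) / 2 ->
     Rabs u < rho /\ Rabs v < rho).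
  { intros u v Hu Hv.
    assert (Rabs u <= Rabs (u - x) + Rabs x). { replace u with ((u - x) + x) at 1 by ring. apply Rabs_triang. }
    assert (Rabs v <= Rabs (v - y) + Rabs y). { replace v with ((v - y) + y) at 1 by ring. apply Rabs_triang. }
    unfold rho; lra. }
  apply diff_part with ((r - m) / 2); auto.
  - intros u v Hu Hv. destruct (Hin u v Hu Hv). apply Fd_dx with r; auto; lra.
  - apply Fd_dz with r; auto.
  - assert (Hr' := Hr).
    set (M1 := Series (fun j => Series (fun k => Rabs (cX (cX c) j k) * rho ^ k) * rho ^ j)).
    set (M2 := Series (fun j => Series (fun k => Rabs (cZ (cX c) j k) * rho ^ k) * rho ^ j)).
    apply cont_bd with (Fd (cX (cX c))) (Fd (cZ (cX c))) ((r - m) / 2) (Rmax M1 M2); auto.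
    intros u v Hu Hv. destruct (Hin u v Hu Hv) as [Hu' Hv'].
    assert (gX := good_X _ _ Hg).
    split; [|split; [|split]].
    + apply Fd_dx with r; auto; lra.
    + apply Fd_dz with r; auto; lra.
    + eapply Rle_trans; [|apply Rmax_l]. apply Fd_bound with r; auto. apply good_X; auto. lra. lra.
    + eapply Rle_trans; [|apply Rmax_r]. apply Fd_bound with r; auto. apply good_Z; auto. lra. lra.
Qed.

Lemma f_smooth (f : R -> R -> R) a b (c : nat -> nat -> R) r : 0 < r ->
  (forall x z, Rabs (x - a) < r -> Rabs (z - b) < r ->
      (forall j, ex_series (fun k => Rabs (c j k * (x - a) ^ j * (z - b) ^ k))) /\
      ex_series (fun j => Series (fun k => Rabs (c j k * (x - a) ^ j * (z - b) ^ k))) /\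
      f x z = Series (fun j => Series (fun k => c j k * (x - a) ^ j * (z - b) ^ k))) ->
  exists W0, Open2 W0 /\ Smooth W0 f /\ W0 a b.
Proof.
  intros Hr Hc.
  assert (Hg : good c r).
  { intros rho Hrho. destruct (Hc (a + rho) (b + rho)) as (E1 & E2 & _).
    replace (a + rho - a) with rho by ring. rewrite Rabs_pos_eq; lra.
    replace (b + rho - b) with rho by ring. rewrite Rabs_pos_eq; lra.
    replace (a + rho - a) with rho in E1, E2 by ring. replace (b + rho - b) with rho in E1, E2 by ring.
    assert (Hp : forall k, 0 < rho ^ k) by (intros; apply pow_lt; lra).
    assert (Eq : forall j k, Rabs (c j k * rho ^ j * rho ^ k) = Rabs (c j k) * rho ^ k * rho ^ j).
    { intros. rewrite !Rabs_mult, (Rabs_pos_eq (rho ^ k)), (Rabs_pos_eq (rho ^ j)) by (apply Rlt_le, Hp). ring. }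
    split.
    - intros j. eapply ex_series_ext; [| apply (ex_series_scal_r (/ rho ^ j) _ (E1 j))].
      intros k. cbv beta. rewrite Eq. toR. field. apply Rgt_not_eq, Hp.
    - eapply ex_series_ext; [|apply E2]. intros j. rewrite <- Series_scal_r.
      apply Series_ext. intros k. rewrite Eq. ring. }
  set (W0 := fun x z => Rabs (x - a) < r /\ Rabs (z - b) < r).
  assert (HO : Open2 W0).
  { intros x z [Hx Hz].
    assert (Hp : 0 < Rmin (r - Rabs (x - a)) (r - Rabs (z - b))) by (apply Rmin_pos; lra).
    exists (mkposreal _ Hp). intros u v Hu Hv. simpl in Hu, Hv.
    assert (Hu' := Rlt_le_trans _ _ _ Hu (Rmin_l _ _)). assert (Hv' := Rlt_le_trans _ _ _ Hv (Rmin_r _ _)).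
    split.
    - assert (Rabs (u - a) <= Rabs (u - x) + Rabs (x - a)).
      { replace (u - a) with ((u - x) + (x - a)) by ring. apply Rabs_triang. } lra.
    - assert (Rabs (v - b) <= Rabs (v - z) + Rabs (z - b)).
      { replace (v - b) with ((v - z) + (z - b)) by ring. apply Rabs_triang. } lra. }
  exists W0. split; auto. split.
  - apply Sm_ext with (fun x z => Fd c (x - a) (z - b)); auto.
    + intros x z [Hx Hz]. destruct (Hc x z Hx Hz) as (_ & _ & E). rewrite E. reflexivity.
    + apply (Sm_comp W0 (sq r) (Fd c) (fun x _ => x - a) (fun _ z => z - b)).
      * intro n. apply Fd_Cn; auto.
      * apply (Sm_plus W0 (fun x _ => x) (fun _ _ => - a)). apply Sm_p1. apply Sm_const.
      * apply (Sm_plus W0 (fun _ z => z) (fun _ _ => - b)). apply Sm_p2. apply Sm_const.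
      * intros x z [Hx Hz]. split; auto.
  - unfold W0. rewrite !Rminus_eq_0, Rabs_R0. lra.
Qed.

Theorem theorem2
  (a b : Rbar) (t0 : R) (y : R -> R) (U : R -> R -> Prop) (f : R -> R -> R)
  (Hab : Rbar_lt a b)
  (Ht0 : open_ival a b t0)
  (Hy : analytic_on (open_ival a b) y)
  (HU : open2 U)
  (Hgraph : forall t, open_ival a b t -> U t (y t))
  (Hf : analytic2_on U f)
  (Hnprod : ~ exists (f0 f1 : R -> R), forall t z, U t z -> f t z = f0 t * f1 z) :
  (* regarded as a function of the independent variables (s, Z) *)
  forall (s : R) (Z : nat -> R), U s (Z 0%nat) ->
     Ftr f 0 s Z = f s (Z 0%nat) /\
     forall n : nat,
       Ftr f (S n) s Z =
         / INR (S n) *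
         (Derive (fun s' => Ftr f n s' Z) s +
          sum_n (fun i => INR (i + 1) * Z (i + 1)%nat *
                          Derive (fun z => Ftr f n s (upd Z i z)) (Z i)) n).
Proof.
  intros s Z HUs.
  destruct (Hf s (Z 0%nat) HUs) as (c & r & Hr & Hc).
  destruct (f_smooth f s (Z 0%nat) c r Hr Hc) as (W0 & HO & HS & Hs).
  split.
  - unfold Ftr. simpl Derive_n. rewrite sum_O, Rplus_0_r. simpl pow. rewrite Rmult_1_r. simpl fact. rewrite INR_1. unfold Rdiv. rewrite Rinv_1, Rmult_1_r. reflexivity.
  - intros n. apply (main_rec f s Z W0 HO HS Hs).
Qed.
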